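(* Assume that in any packing of unit balls in $\mathbb{E}^3$, whenever $14$ different members $\mathbf{B}_1,\dots,\mathbf{B}_{14}$ are such that each of $\mathbf{B}_2,\dots,\mathbf{B}_{13}$ touches $\mathbf{B}_1$, the centers of $\mathbf{B}_1$ and $\mathbf{B}_{14}$ are at distance at least $2.52$. Then: if $\mathbf{B}_1,\dots,\mathbf{B}_{13}$ are $13$ different members of a packing of unit balls in $\mathbb{E}^3$ with each of $\mathbf{B}_2,\dots,\mathbf{B}_{13}$ touching $\mathbf{B}_1$, and $\hat{\mathbf{B}}_i$ is the closed ball of radius $\hat r:=1.58731$ concentric with $\mathbf{B}_i$, then $$\mathrm{bd}(\hat{\mathbf{B}}_1)\subset\bigcup_{j=2}^{13}\hat{\mathbf{B}}_j.$$
   Context: A packing of unit balls is a family of closed unit balls in $\mathbb{E}^3$ with pairwise disjoint interiors; two balls touch if their centers are at distance $2$. $\mathrm{bd}$ denotes boundary. *)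

(* Defs.v *)
From Stdlib Require Import Reals.
Open Scope R_scope.

Definition point : Type := (R * R * R)%type.

Definition edist (p q : point) : R :=
  let '(x1, y1, z1) := p in
  let '(x2, y2, z2) := q in
  sqrt ((x1 - x2)^2 + (y1 - y2)^2 + (z1 - z2)^2).

Definition closed_ball (c : point) (r : R) (x : point) : Prop := edist x c <= r.
Definition open_ball (c : point) (r : R) (x : point) : Prop := edist x c < r.
Definition sphere (c : point) (r : R) (x : point) : Prop := edist x c = r.

(* A family of closed unit balls is represented by the set of its centers
   (a unit ball is determined by its center).  It is a packing if distinct
   members have disjoint interiors. *)
Definition unit_ball_packing (P : point -> Prop) : Prop :=
  forall c d : point, P c -> P d -> c <> d ->
    ~ (exists z : point, open_ball c 1 z /\ open_ball d 1 z).

Definition touches (c d : point) : Prop := edist c d = 2.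

Definition r_hat : R := 1.58731.

(* Main.v *)
Require Import Defs.
From Stdlib Require Import Reals Lra Psatz Classical Arith Lia.
Open Scope R_scope.

Definition px (p : point) : R := fst (fst p).
Definition py (p : point) : R := snd (fst p).
Definition pz (p : point) : R := snd p.
Definition dist2 (p q : point) : R :=
  (px p - px q)^2 + (py p - py q)^2 + (pz p - pz q)^2.

Lemma edist_eq p q : edist p q = sqrt (dist2 p q).
Proof. destruct p as [[a b] c]; destruct q as [[d e] f]; reflexivity. Qed.

Lemma dist2_ge0 p q : 0 <= dist2 p q.
Proof. unfold dist2. pose proof (pow2_ge_0 (px p - px q)); pose proof (pow2_ge_0 (py p - py q)); pose proof (pow2_ge_0 (pz p - pz q)); lra. Qed.

Lemma dist2_sym p q : dist2 p q = dist2 q p.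
Proof. unfold dist2; ring. Qed.

Lemma sqrt_sq S : 0 <= S -> sqrt S * sqrt S = S.
Proof. intro; apply sqrt_sqrt; auto. Qed.

Lemma sqrt_lt_sq S a : 0 <= S -> 0 <= a -> sqrt S < a -> S < a * a.
Proof. intros HS Ha H. pose proof (sqrt_sq S HS). pose proof (sqrt_pos S). nra. Qed.

Lemma sqrt_ge_sq S a : 0 <= S -> 0 <= a -> sqrt S >= a -> S >= a * a.
Proof. intros HS Ha H. pose proof (sqrt_sq S HS). pose proof (sqrt_pos S). nra. Qed.

Lemma sq_lt_sqrt S a : 0 <= S -> 0 <= a -> S < a * a -> sqrt S < a.
Proof. intros HS Ha H. destruct (Rlt_or_le (sqrt S) a); auto.
  pose proof (sqrt_sq S HS). nra. Qed.

Lemma sq_ge_sqrt S a : 0 <= S -> 0 <= a -> S >= a * a -> sqrt S >= a.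
Proof. intros HS Ha H. destruct (Rlt_or_le (sqrt S) a); [|lra].
  pose proof (sqrt_sq S HS). pose proof (sqrt_pos S). nra. Qed.

Lemma far_pair c d : dist2 c d >= 4 ->
  ~ (exists z : point, open_ball c 1 z /\ open_ball d 1 z).
Proof.
  intros H [z [H1 H2]]. unfold open_ball in *. rewrite edist_eq in *.
  apply sqrt_lt_sq in H1; [|apply dist2_ge0|lra].
  apply sqrt_lt_sq in H2; [|apply dist2_ge0|lra].
  assert (E : 2 * dist2 z c + 2 * dist2 z d - dist2 c d =
    (2*px z - px c - px d)^2 + (2*py z - py c - py d)^2 + (2*pz z - pz c - pz d)^2)
    by (unfold dist2; ring).
  pose proof (pow2_ge_0 (2*px z - px c - px d)).
  pose proof (pow2_ge_0 (2*py z - py c - py d)).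
  pose proof (pow2_ge_0 (2*pz z - pz c - pz d)). lra.
Qed.

Theorem mainTheorem12 :
  (forall (P : point -> Prop) (c : nat -> point),
      unit_ball_packing P ->
      (forall i, (1 <= i <= 14)%nat -> P (c i)) ->
      (forall i j, (1 <= i <= 14)%nat -> (1 <= j <= 14)%nat -> i <> j -> c i <> c j) ->
      (forall j, (2 <= j <= 13)%nat -> touches (c j) (c 1%nat)) ->
      edist (c 1%nat) (c 14%nat) >= 2.52) ->
  forall (P : point -> Prop) (c : nat -> point),
    unit_ball_packing P ->
    (forall i, (1 <= i <= 13)%nat -> P (c i)) ->
    (forall i j, (1 <= i <= 13)%nat -> (1 <= j <= 13)%nat -> i <> j -> c i <> c j) ->
    (forall j, (2 <= j <= 13)%nat -> touches (c j) (c 1%nat)) ->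
    forall x : point, sphere (c 1%nat) r_hat x ->
      exists j, (2 <= j <= 13)%nat /\ closed_ball (c j) r_hat x.
Proof.
  intros H P c Hpack Hmem Hdist Htouch x Hx.
  apply NNPP; intro Hno.
  set (r := r_hat) in *.
  assert (Hr : 1.58 < r < 1.59) by (unfold r, r_hat; lra).
  assert (Hx2 : dist2 x (c 1%nat) = r * r).
  { unfold sphere in Hx. rewrite edist_eq in Hx.
    rewrite <- Hx, sqrt_sq; auto. apply dist2_ge0. }
  assert (Hfar : forall j, (2 <= j <= 13)%nat -> dist2 x (c j) > r * r).
  { intros j Hj. destruct (Rlt_or_le (r*r) (dist2 x (c j))) as [h|h]; auto.
    exfalso. apply Hno. exists j. split; auto. unfold closed_ball.
    rewrite edist_eq. destruct (Rlt_or_le r (sqrt (dist2 x (c j)))) as [h'|h']; auto.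
    pose proof (sqrt_sq _ (dist2_ge0 x (c j))). nra. }
  assert (Ht : forall j, (2 <= j <= 13)%nat -> dist2 (c j) (c 1%nat) = 4).
  { intros j Hj. pose proof (Htouch j Hj) as T. unfold touches in T.
    rewrite edist_eq in T. rewrite <- (sqrt_sq (dist2 (c j) (c 1%nat))) by apply dist2_ge0.
    rewrite T; ring. }
  set (k := 4 / (r * r)).
  assert (Hk : k * (r * r) = 4) by (unfold k; field; lra).
  assert (Hrr : r * r = 2.5195530361) by (unfold r, r_hat; lra).
  assert (Hk1 : 1 <= k) by (rewrite Hrr in Hk; lra).
  assert (Hk2 : 4 * k < 2.52 * 2.52) by (rewrite Hrr in Hk; lra).
  set (a := c 1%nat) in *.
  set (y := ((px a + k * (px x - px a), py a + k * (py x - py a)),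
             pz a + k * (pz x - pz a)) : point).
  assert (Hya : dist2 y a = 4 * k).
  { rewrite <- Hk. rewrite <- Hx2. unfold dist2, y, px, py, pz; simpl. ring. }
  assert (Hyj : forall j, (2 <= j <= 13)%nat -> dist2 y (c j) > 4).
  { intros j Hj. pose proof (Hfar j Hj). pose proof (Ht j Hj).
    assert (E : dist2 y (c j) = k * k * dist2 x a + dist2 (c j) a
               - k * (dist2 (c j) a + dist2 x a - dist2 x (c j))).
    { unfold dist2, y, px, py, pz; simpl. ring. }
    rewrite E, Hx2, H1. nra. }
  assert (Hyall : forall i, (1 <= i <= 13)%nat -> dist2 y (c i) >= 4).
  { intros i Hi. destruct (Nat.eq_dec i 1) as [->|n].
    - fold a. lra.
    - pose proof (Hyj i ltac:(lia)). lra. }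
  set (P' := fun z : point => (exists i, (1 <= i <= 13)%nat /\ z = c i) \/ z = y).
  set (c' := fun i => if Nat.eqb i 14 then y else c i).
  assert (Hc' : forall i, i <> 14%nat -> c' i = c i).
  { intros i Hi. unfold c'. destruct (Nat.eqb_spec i 14); congruence. }
  assert (Hneq : forall i, (1 <= i <= 13)%nat -> y <> c i).
  { intros i Hi E. pose proof (Hyall i Hi). rewrite E in H0.
    unfold dist2 in H0. lra. }
  specialize (H P' c').
  assert (Hc1 : c' 1%nat = a) by reflexivity.
  assert (Hc14 : c' 14%nat = y) by reflexivity.
  assert (Hfin : edist (c' 1%nat) (c' 14%nat) >= 2.52).
  { apply H.
    - intros d e [[i [Hi ->]]| ->] [[i' [Hi' ->]]| ->] Hne.
      + apply Hpack; auto.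
      + apply far_pair. rewrite dist2_sym. auto.
      + intros [z [A B]]. apply (far_pair (c i') y); [rewrite dist2_sym; auto|].
        exists z; auto.
      + congruence.
    - intros i Hi. destruct (Nat.eq_dec i 14) as [->|n].
      + right; reflexivity.
      + left. exists i. split; [lia|]. rewrite Hc'; auto.
    - intros i j Hi Hj Hij. destruct (Nat.eq_dec i 14) as [->|n];
      destruct (Nat.eq_dec j 14) as [->|n'].
      + congruence.
      + rewrite Hc14, Hc'; auto. apply Hneq; lia.
      + rewrite Hc14, Hc'; auto. intro E; apply (Hneq i); [lia|auto].
      + rewrite !Hc'; auto. apply Hdist; lia.
    - intros j Hj. rewrite !Hc' by lia. apply Htouch; auto. }
  rewrite Hc1, Hc14, edist_eq, dist2_sym, Hya in Hfin.
  apply sqrt_ge_sq in Hfin; [lra|lra|lra].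
Qed.
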